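(* Let $(l_n)_{n\ge 1}$, $(r_n)_{n\ge 1}$ be real numbers with $l_n,r_n>0$ and $l_n+r_n=1$, let $k\ge 1$ be an integer, and let $(X_m)_{m\ge 0}$ be the birth-death chain with these probabilities and $X_0=k$; let $T_\Delta$ be its first hitting time of $0$, and assume $P(T_\Delta<\infty)=1$. Let $t_0=1$, $t_n=\frac{l_1\cdots l_n}{r_1\cdots r_n}$ for $n\ge1$, and $x_n=\sum_{i=0}^{n-1}t_i$. For a random time $T$ and $n\ge 1$, let $G_T^n$ denote the number of times $m\in\{0,\dots,T-1\}$ with $X_m=n$. Let $(T_m)_{m\ge1}$ be a non-decreasing sequence of stopping times with $E[T_m]<\infty$ and $T_m\to T_\Delta$ almost surely. Then for every $n\ge 1$, $$E[G_{T_\Delta}^n]=\lim_{m\to\infty}E[G_{T_m}^n]=\frac{\min(x_n,x_k)}{t_{n-1}l_n}.$$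
   Context: The birth-death chain: $(X_m)$ is a Markov chain on the nonnegative integers which from a state $n\ge 1$ moves to $n+1$ with probability $r_n$ and to $n-1$ with probability $l_n$, and for which $0$ is absorbing. Stopping times are with respect to the natural filtration of $(X_m)$. *)

(* Defs.v *)
From HB Require Import structures.
From mathcomp Require Import all_boot all_order all_algebra.
From mathcomp Require Import all_classical all_reals all_analysis.
Set Implicit Arguments. Unset Strict Implicit. Unset Printing Implicit Defensive.
Import Order.TTheory GRing.Theory Num.Theory.
Local Open Scope classical_set_scope.
Local Open Scope ring_scope.

Definition bd_trans {R : realType} (l r : nat -> R) (x y : nat) : R :=
  if x == 0%N then (if y == 0%N then 1 else 0)
  else if y == x.+1 then r x
  else if y.+1 == x then l x
  else 0.

(* (X_m) is a Markov chain with transition kernel bd_trans l r and X_0 = k a.s.,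
   stated through its finite-dimensional distributions (discrete state space). *)
Definition is_bd_chain {d} {T : measurableType d} {R : realType}
  (P : probability T R) (l r : nat -> R) (k : nat) (X : nat -> T -> nat) : Prop :=
  (forall m j, measurable [set w | X m w = j]) /\
  P [set w | X 0%N w = k] = 1%E /\
  (forall (m : nat) (s : nat -> nat) (y : nat),
     P [set w | (forall i, (i <= m)%N -> X i w = s i) /\ X m.+1 w = y] =
     (P [set w | forall i, (i <= m)%N -> X i w = s i] * (bd_trans l r (s m) y)%:E)%E).

(* Random times with values in nat ∪ {∞}: None = ∞. *)
Definition etime {R : realType} (t : option nat) : \bar R :=
  match t with Some n => (n%:R)%:E | None => +oo%E end.

(* Stopping time w.r.t. the natural filtration of X: each event {T = n}
   belongs to σ(X_0,...,X_n) (X is nat-valued, so these are exactly the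
   preimages of subsets of nat^(n+1)). *)
Definition stopping_time {T : Type} (X : nat -> T -> nat) (tau : T -> option nat) : Prop :=
  forall n : nat, exists B : set (seq nat),
    [set w | tau w = Some n] = [set w | B [seq X i w | i <- iota 0 n.+1]].

Definition hit0 {T : Type} (X : nat -> T -> nat) (w : T) : option nat :=
  match pselect (exists m, X m w == 0%N) with
  | left h => Some (ex_minn h)
  | right _ => None
  end.

Definition Gcount {R : realType} {T : Type} (X : nat -> T -> nat)
  (tau : T -> option nat) (n : nat) (w : T) : \bar R :=
  (\sum_(i <oo) (((X i w == n) && (etime (tau w) > ((i%:R : R))%:E)%E)%:R : R)%:E)%E.

Definition tseq {R : realType} (l r : nat -> R) (n : nat) : R :=
  \prod_(0 <= i < n) (l i.+1 / r i.+1).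

Definition xseq {R : realType} (l r : nat -> R) (n : nat) : R :=
  \sum_(0 <= i < n) tseq l r i.

(* Main.v *)
Require Import Defs.
From HB Require Import structures.
From mathcomp Require Import all_boot all_order all_algebra.
From mathcomp Require Import all_classical all_reals all_analysis.
From mathcomp Require Import zify ring lra.
From mathcomp Require Import measurable_realfun.
Import Order.TTheory GRing.Theory Num.Theory.
Local Open Scope classical_set_scope.
Local Open Scope ring_scope.
Set Implicit Arguments. Unset Strict Implicit. Unset Printing Implicit Defensive.

Lemma mXB d (T : measurableType d) (X : nat -> T -> nat) :
  (forall m j, measurable [set w | X m w = j]) ->
  forall m (B : set nat), measurable [set w | B (X m w)].
Proof.
move=> mX m B.
have -> : [set w | B (X m w)] = \bigcup_(j in B) [set w | X m w = j].
  by apply/seteqP; split => [w Bw|w [j Bj /= ->]]; [exists (X m w)|].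
by apply: bigcup_measurable => j _; exact: mX.
Qed.

Lemma mcyl d (T : measurableType d) (X : nat -> T -> nat) :
  (forall m j, measurable [set w | X m w = j]) ->
  forall len a (B : set (seq nat)), measurable [set w | B [seq X i w | i <- iota a len]].
Proof.
move=> mX; elim=> [|len IH] a B /=.
  by case: (pselect (B [::])) => h; [rewrite (_ : [set _ | _] = setT) //; apply/seteqP; split|
     rewrite (_ : [set _ | _] = set0) //; apply/seteqP; split].
have -> : [set w | B (X a w :: [seq X i w | i <- iota a.+1 len])] =
  \bigcup_(x in setT) ([set w | X a w = x] `&` [set w | (fun s => B (x :: s)) [seq X i w | i <- iota a.+1 len]]).
  by apply/seteqP; split => [w Bw|w [x _ [/= -> //]]]; exists (X a w).
by apply: bigcupT_measurable => x; apply: measurableI; [exact: mX|exact: (IH a.+1 (fun s => B (x :: s)))].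
Qed.

Definition Acyl {T : Type} (X : nat -> T -> nat) (m j : nat) (C : nat -> set nat) (s : nat -> nat) : set T :=
  [set w | forall i, (i <= m)%N -> if (i < j)%N then C i (X i w) else X i w = s i].

Lemma mAcyl d (T : measurableType d) (X : nat -> T -> nat) :
  (forall m j, measurable [set w | X m w = j]) ->
  forall m j C s, measurable (Acyl X m j C s).
Proof.
move=> mX; elim=> [|m IH] j C s.
  have -> : Acyl X 0 j C s = if (0 < j)%N then [set w | C 0%N (X 0%N w)] else [set w | X 0%N w = s 0%N].
    apply/seteqP; split => [w H|w H i]; first by have := H 0%N (leqnn 0); case: ifP.
    by rewrite leqn0 => /eqP ->; case: ifP H.
  by case: ifP => _; [exact: (mXB mX)|exact: mX].
have -> : Acyl X m.+1 j C s = Acyl X m j C s `&`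
   (if (m.+1 < j)%N then [set w | C m.+1 (X m.+1 w)] else [set w | X m.+1 w = s m.+1]).
  apply/seteqP; split => [w H|w [H1 H2] i].
    split; first by move=> i im; apply: H; exact: leqW.
    by have := H m.+1 (leqnn _); case: ifP.
  rewrite leq_eqVlt => /orP[/eqP ->|]; first by case: ifP H2.
  by rewrite ltnS; exact: H1.
apply: measurableI; first exact: IH.
by case: ifP => _; [exact: (mXB mX)|exact: mX].
Qed.

Lemma markovS d (T : measurableType d) (R : realType) (P : probability T R)
  (l r : nat -> R) (k : nat) (X : nat -> T -> nat) :
  is_bd_chain P l r k X ->
  forall m y j, (j <= m)%N -> forall C s,
  P (Acyl X m j C s `&` [set w | X m.+1 w = y]) =
  (P (Acyl X m j C s) * (bd_trans l r (s m) y)%:E)%E.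
Proof.
move=> [mX [_ fdd]] m y; elim=> [|j IH] jm C s.
  have -> : Acyl X m 0 C s = [set w | forall i, (i <= m)%N -> X i w = s i] by [].
  exact: fdd.
pose sb b := fun i => if i == j then b else s i.
have sbm b : sb b m = s m by rewrite /sb; case: eqP => // Hm; rewrite Hm ltnn in jm.
have Ae : Acyl X m j.+1 C s = \bigcup_(b in C j) Acyl X m j C (sb b).
  apply/seteqP; split => [w H|w [b Cb H] i im].
    exists (X j w); first by have := H j (ltnW jm); rewrite ltnSn.
    move=> i im; have := H i im; rewrite /sb ltnS.
    case: (ltngtP i j) => [ij|ji|->]; rewrite ?eqxx ?ltnn //.
  have := H i im; rewrite /sb ltnS.
  case: (ltngtP i j) => [ij|ji|->]; rewrite ?eqxx ?ltnn //.
  by move=> ->.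
have tr : forall Y : set T, trivIset (C j) (fun b => Acyl X m j C (sb b) `&` Y).
  move=> Y b1 b2 _ _ [w [[H1 _] [H2 _]]].
  have := H1 j (ltnW jm); have := H2 j (ltnW jm); rewrite /sb ltnn eqxx.
  by move=> <-.
have mA b : measurable (Acyl X m j C (sb b)) by exact: mAcyl.
rewrite Ae setI_bigcupl.
rewrite measure_bigcup; last 2 first.
- by move=> b _; apply: measurableI => //; exact: mX.
- exact: tr.
rewrite measure_bigcup; last 2 first.
- by move=> b _.
- by have := tr setT; under eq_fun do rewrite setIT.
transitivity (\sum_(i <oo | i \in C j) ((bd_trans l r (s m) y)%:E * P (Acyl X m j C (sb i))))%E.
  apply: eq_eseriesr => b _. etransitivity; first exact: (IH (ltnW jm) C (sb b)). by rewrite sbm muleC.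
rewrite nneseriesZl // muleC //.
Qed.

Lemma markov1 d (T : measurableType d) (R : realType) (P : probability T R)
  (l r : nat -> R) (k : nat) (X : nat -> T -> nat) :
  is_bd_chain P l r k X ->
  forall m (C : nat -> set nat) a y,
  P ([set w | (forall i, (i < m)%N -> C i (X i w)) /\ X m w = a] `&` [set w | X m.+1 w = y]) =
  (P [set w | (forall i, (i < m)%N -> C i (X i w)) /\ X m w = a] * (bd_trans l r a y)%:E)%E.
Proof.
move=> hX m C a y.
have -> : [set w | (forall i, (i < m)%N -> C i (X i w)) /\ X m w = a] = Acyl X m m C (fun _ => a).
  apply/seteqP; split => [w [H1 H2] i im|w H]; first by case: ifP => [/H1 //|]; rewrite ltn_neqAle im andbT => /negbFE/eqP ->.
  split; last by have := H m (leqnn m); rewrite ltnn.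
  by move=> i im; have := H i (ltnW im); rewrite im.
exact: (markovS hX y (leqnn m)).
Qed.

Definition Uset {T : Type} (X : nat -> T -> nat) (i j : nat) : set T :=
  [set w | (forall i', (i' < i)%N -> X i' w <> 0%N) /\ X i w = j].

Lemma bd_ge0 (R : realType) (l r : nat -> R) :
  (forall n, (1 <= n)%N -> 0 < l n /\ 0 < r n /\ l n + r n = 1) ->
  forall a j, 0 <= bd_trans l r a j.
Proof.
move=> hp a j; rewrite /bd_trans; case: eqP => [_|/eqP a0]; first by case: ifP.
have [l0 [r0 _]] := hp a ltac:(by rewrite lt0n).
case: ifP => _; first exact: ltW.
by case: ifP => _; [exact: ltW|].
Qed.

Lemma Urec d (T : measurableType d) (R : realType) (P : probability T R)
  (l r : nat -> R) (k : nat) (X : nat -> T -> nat) :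
  is_bd_chain P l r k X ->
  forall i j, P (Uset X i.+1 j) =
  (\sum_(a <oo | a \in [set a | a <> 0%N]) (P (Uset X i a) * (bd_trans l r a j)%:E))%E.
Proof.
move=> hX i j.
have mX := hX.1.
have -> : Uset X i.+1 j = \bigcup_(a in [set a | a <> 0%N])
   ([set w | (forall i', (i' < i)%N -> (fun _ => [set a | a <> 0%N]) i' (X i' w)) /\ X i w = a] `&` [set w | X i.+1 w = j]).
  apply/seteqP; split => [w [H1 H2]|w [a a0 [[H1 H2] H3]]].
    exists (X i w); first exact: H1.
    by split => //; split => // i' i'i; apply: H1; exact: ltnW.
  split => // i'; rewrite ltnS leq_eqVlt => /orP[/eqP ->|]; first by rewrite H2.
  exact: H1.
rewrite measure_bigcup; last 2 first.
- move=> a _; apply: measurableI; last exact: mX.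
  have -> : [set w | (forall i', (i' < i)%N -> (fun _ => [set a | a <> 0%N]) i' (X i' w)) /\ X i w = a]
     = Acyl X i i (fun _ => [set a | a <> 0%N]) (fun _ => a).
    apply/seteqP; split => [w [H1 H2] i' im|w H]; first by case: ifP => [/H1 //|]; rewrite ltn_neqAle im andbT => /negbFE/eqP ->.
    split; last by have := H i (leqnn i); rewrite ltnn.
    by move=> i' im; have := H i' (ltnW im); rewrite im.
  exact: mAcyl.
- move=> a1 a2 _ _ [w [[[_ H1] _] [[_ H2] _]]]; by rewrite -H1 -H2.
apply: eq_eseriesr => a _.
etransitivity; first exact: (markov1 hX i (fun _ => [set a | a <> 0%N]) a j).
by [].
Qed.

Lemma bd_other (R : realType) (l r : nat -> R) a j :
  a != 0%N -> a != j.+1 -> a != j.-1 -> bd_trans l r a j = 0.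
Proof.
move=> a0 a1 a2; rewrite /bd_trans (negbTE a0).
case: ifP => [/eqP ja|_]; first by move: a2; rewrite ja /= eqxx.
by case: ifP => [/eqP ja|//]; move: a1; rewrite ja eqxx.
Qed.

Lemma Urec_eval d (T : measurableType d) (R : realType) (P : probability T R)
  (l r : nat -> R) (k : nat) (X : nat -> T -> nat) :
  (forall n, (1 <= n)%N -> 0 < l n /\ 0 < r n /\ l n + r n = 1) ->
  is_bd_chain P l r k X ->
  forall i j, P (Uset X i.+1 j) =
  ((if (1 < j)%N then P (Uset X i j.-1) * (r j.-1)%:E else 0) +
   P (Uset X i j.+1) * (l j.+1)%:E)%E.
Proof.
move=> hp hX i j.
rewrite (Urec hX).
have f0 : forall a, a \in [set a | a <> 0%N] -> (0 <= P (Uset X i a) * (bd_trans l r a j)%:E)%E.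
  by move=> a _; apply: mule_ge0 => //; rewrite lee_fin; exact: bd_ge0.
rewrite (@nneseriesD1 _ _ j.+1) //; last by rewrite inE.
have -> : bd_trans l r j.+1 j = l j.+1 by rewrite /bd_trans /= eqxx; case: ifP => // /eqP; lia.
rewrite addeC; congr (_ + _)%E.
case: ifP => j1.
  rewrite (@nneseriesD1 _ _ j.-1); last 2 first.
  - by move=> a /andP[+ _]; exact: f0.
  - by apply/andP; split; [rewrite inE /=; lia|apply/eqP; lia].
  have -> : bd_trans l r j.-1 j = r j.-1.
    rewrite /bd_trans; have -> : (j.-1 == 0%N) = false by apply/eqP; lia.
    by have -> : (j == j.-1.+1) by apply/eqP; lia.
  rewrite -[RHS]adde0; congr (_ + _)%E.
  apply: eseries0 => a _ /andP[/andP[]]; rewrite inE /= => a0 a1 a2.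
  by rewrite bd_other ?mule0 //; apply/eqP.
apply: eseries0 => a _ /andP[]; rewrite inE /= => a0 a1.
rewrite bd_other ?mule0 //; first by apply/eqP.
by apply/eqP => ha; move: a0; rewrite ha; lia.
Qed.

Lemma eser_shift (R : realType) (f : nat -> \bar R) : (forall i, (0 <= f i)%E) ->
  (\sum_(i <oo) f i = f 0%N + \sum_(i <oo) f i.+1)%E.
Proof.
move=> f0; rewrite nneseries_recl //; congr (_ + _)%E.
have cA : cvgn (fun n => \sum_(1 <= k < n) f k)%E by apply: is_cvg_nneseries.
have -> : (fun n => \sum_(0 <= k < n) f k.+1)%E = (fun n => \sum_(1 <= k < n.+1) f k)%E.
  apply/funext => n; rewrite big_add1 /=; apply: eq_big_nat => k /andP[+ _].
  by case: k.
apply/esym/cvg_lim => //; rewrite (cvg_shiftS (fun n => \sum_(1 <= k < n) f k)%E).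
exact: cA.
Qed.

Lemma Uset0 {T : Type} (X : nat -> T -> nat) j : Uset X 0 j = [set w | X 0%N w = j].
Proof. by apply/seteqP; split => [w [] //|w H]; split. Qed.

Lemma U0 d (T : measurableType d) (R : realType) (P : probability T R)
  (l r : nat -> R) (k : nat) (X : nat -> T -> nat) :
  is_bd_chain P l r k X ->
  forall j, P (Uset X 0 j) = (if j == k then 1 else 0)%E.
Proof.
move=> [mX [Pk _]] j; rewrite Uset0; case: eqP => [->//|jk].
apply/eqP; rewrite eq_le measure_ge0 andbT.
have : P (~` [set w | X 0%N w = k]) = 0%E by rewrite probability_setC // Pk subee.
move=> <-; apply: le_measure; rewrite ?inE //; first exact: measurableC.
by move=> w /= ->.
Qed.

Lemma hit0_some {T : Type} (X : nat -> T -> nat) w :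
  hit0 X w <> None <-> exists m, X m w = 0%N.
Proof.
rewrite /hit0; case: pselect => [[m h]|h]; split => //.
- by move=> _; exists m; apply/eqP.
- by case=> m hm; case: h; exists m; apply/eqP.
Qed.

Lemma kill d (T : measurableType d) (R : realType) (P : probability T R)
  (l r : nat -> R) (k : nat) (X : nat -> T -> nat) :
  (forall n, (1 <= n)%N -> 0 < l n /\ 0 < r n /\ l n + r n = 1) -> (1 <= k)%N ->
  is_bd_chain P l r k X ->
  P [set w | hit0 X w <> None] = (\sum_(i <oo) (P (Uset X i 1) * (l 1%N)%:E))%E.
Proof.
move=> hp k1 hX.
have mX := hX.1.
have mU i j : measurable (Uset X i j).
  have -> : Uset X i j = Acyl X i i (fun _ => [set a | a <> 0%N]) (fun _ => j).
    apply/seteqP; split => [w [H1 H2] i' im|w H]; first by case: ifP => [/H1 //|]; rewrite ltn_neqAle im andbT => /negbFE/eqP ->.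
    split; last by have := H i (leqnn i); rewrite ltnn.
    by move=> i' im; have := H i' (ltnW im); rewrite im.
  exact: mAcyl.
have -> : [set w | hit0 X w <> None] = \bigcup_(i in setT) Uset X i 0.
  apply/seteqP; split => [w /hit0_some H|w [i _ [_ H]]]; last by apply/hit0_some; exists i.
  have H' : exists m, X m w == 0%N by case: H => m hm; exists m; apply/eqP.
  case: (ex_minnP H') => m /eqP hm hmin.
  exists m => //; split => // i' i'm h; have := hmin i' (introT eqP h).
  by rewrite leqNgt i'm.
rewrite measure_bigcup //; last first.
  move=> i1 i2 _ _ [w [[H1 H2] [H3 H4]]].
  case: (ltngtP i1 i2) => // h; first by have := H3 _ h.
  by have := H1 _ h.
transitivity (\sum_(i <oo) P (Uset X i 0))%E.
  by apply: eq_eseriesl => i; rewrite in_setT.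
rewrite eser_shift // (U0 hX) (_ : (0 == k)%N = false) ?add0e; last by apply/eqP; lia.
apply: eq_eseriesr => i _; rewrite (Urec_eval hp hX) /= add0e //.
Qed.

Lemma hit0_gt (R : realType) {T : Type} (X : nat -> T -> nat) w i :
  (((i%:R : R)%:E < etime (hit0 X w))%E) <-> (forall i', (i' <= i)%N -> X i' w <> 0%N).
Proof.
rewrite /hit0; case: pselect => [h|h] /=.
  case: ex_minnP => m /eqP hm hmin; rewrite lte_fin ltr_nat; split.
    move=> im i' i'i h0; have := hmin i' (introT eqP h0); rewrite leqNgt.
    by move/negP; apply; exact: leq_ltn_trans i'i im.
  by move=> H; rewrite ltnNge; apply/negP => mi; exact: (H m mi).
split => [_ i' _ h0|_]; last exact: ltey.
apply: h; exists i'; exact/eqP.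
Qed.

Lemma G_hit0 (R : realType) {T : Type} (X : nat -> T -> nat) n w : (1 <= n)%N ->
  Gcount (R:=R) X (hit0 X) n w = (\sum_(i <oo) (\1_(Uset X i n) w : R)%:E)%E.
Proof.
move=> n1; apply: eq_eseriesr => i _; congr (_ %:E); rewrite indicE; congr (_%:R).
congr (nat_of_bool _); apply/idP/idP.
  move=> /andP[/eqP hX /(hit0_gt) H]; rewrite inE; split => // i' i'i; apply: H; exact: ltnW.
rewrite inE => -[H hX]; rewrite hX eqxx /=; apply/(hit0_gt _ _ i).
move=> i'; rewrite leq_eqVlt => /orP[/eqP ->|]; last exact: H.
by rewrite hX; lia.
Qed.

Lemma mU d (T : measurableType d) (X : nat -> T -> nat) :
  (forall m j, measurable [set w | X m w = j]) -> forall i j, measurable (Uset X i j).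
Proof.
move=> mX i j.
have -> : Uset X i j = Acyl X i i (fun _ => [set a | a <> 0%N]) (fun _ => j).
  apply/seteqP; split => [w [H1 H2] i' im|w H]; first by case: ifP => [/H1 //|]; rewrite ltn_neqAle im andbT => /negbFE/eqP ->.
  split; last by have := H i (leqnn i); rewrite ltnn.
  by move=> i' im; have := H i' (ltnW im); rewrite im.
exact: mAcyl.
Qed.

Lemma EG_hit0 d (T : measurableType d) (R : realType) (P : probability T R)
  (l r : nat -> R) (k : nat) (X : nat -> T -> nat) :
  is_bd_chain P l r k X -> forall n, (1 <= n)%N ->
  (\int[P]_w (Gcount X (hit0 X) n w : \bar R) = \sum_(i <oo) P (Uset X i n))%E.
Proof.
move=> hX n n1; have mX := hX.1.
under eq_integral do rewrite G_hit0 //.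
rewrite integral_nneseries //.
- apply: eq_eseriesr => i _; rewrite integral_indic ?setIT //; exact: mU.
- move=> i; apply/measurable_EFinP; apply: measurable_indic; exact: mU.
Qed.


Lemma ts_pos (R : realType) (l r : nat -> R) :
  (forall n, (1 <= n)%N -> 0 < l n /\ 0 < r n /\ l n + r n = 1) ->
  forall j, 0 < tseq l r j.
Proof.
move=> hp; elim=> [|j IH]; first by rewrite /tseq big_geq.
rewrite /tseq big_nat_recr //= -/(tseq l r j).
have [l0 [r0 _]] := hp j.+1 isT.
by apply: mulr_gt0 => //; apply: divr_gt0.
Qed.

Lemma ts_S (R : realType) (l r : nat -> R) j :
  tseq l r j.+1 = tseq l r j * (l j.+1 / r j.+1).
Proof. by rewrite /tseq big_nat_recr. Qed.

Lemma xs_S (R : realType) (l r : nat -> R) j :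
  xseq l r j.+1 = xseq l r j + tseq l r j.
Proof. by rewrite /xseq big_nat_recr. Qed.

Lemma xs_mono (R : realType) (l r : nat -> R) :
  (forall n, (1 <= n)%N -> 0 < l n /\ 0 < r n /\ l n + r n = 1) ->
  forall a b, (a <= b)%N -> xseq l r a <= xseq l r b.
Proof.
move=> hp a b ab; rewrite -(subnKC ab); elim: (b - a)%N => [|c IH]; first by rewrite addn0.
rewrite addnS xs_S (le_trans IH) // lerDl; exact/ltW/ts_pos.
Qed.

Definition Gf (R : realType) (l r : nat -> R) (k j : nat) : R :=
  Num.min (xseq l r j) (xseq l r k) / (tseq l r j.-1 * l j).

Lemma Gflux (R : realType) (l r : nat -> R) k :
  (forall n, (1 <= n)%N -> 0 < l n /\ 0 < r n /\ l n + r n = 1) -> (1 <= k)%N ->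
  (Gf l r k 1 * l 1%N = 1) /\
  forall j, (1 <= j)%N -> Gf l r k j.+1 * l j.+1 = Gf l r k j * r j + (if (j < k)%N then 1 else 0).
Proof.
move=> hp k1.
have xs1 : xseq l r 1 = 1 by rewrite xs_S /xseq /tseq !big_geq // add0r.
split.
  rewrite /Gf /= /tseq big_geq // mul1r xs1.
  have -> : Num.min 1 (xseq l r k) = 1.
    by apply/min_idPl; rewrite -xs1; apply: xs_mono.
  have [l0 _] := hp 1%N isT; rewrite mul1r mulVf //; exact: lt0r_neq0.
move=> j j1.
have [l0 [r0 _]] := hp j j1.
have [l1 [r1 _]] := hp j.+1 isT.
have t0 := ts_pos hp j.-1.
have tj := ts_pos hp j.
have tS : tseq l r j = tseq l r j.-1 * (l j / r j) by rewrite -{1}(prednK j1) ts_S prednK.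
have e1 : Gf l r k j.+1 * l j.+1 = Num.min (xseq l r j.+1) (xseq l r k) / tseq l r j.
  rewrite /Gf /=; field; apply/andP; split; apply: lt0r_neq0 => //.
have e2 : Gf l r k j * r j = Num.min (xseq l r j) (xseq l r k) / tseq l r j.
  rewrite /Gf tS; field; apply/and3P; split; apply: lt0r_neq0 => //.
rewrite e1 e2 xs_S.
case: ltnP => jk.
  have m1 : Num.min (xseq l r j + tseq l r j) (xseq l r k) = xseq l r j + tseq l r j.
    by apply/min_idPl; rewrite -xs_S; apply: xs_mono.
  have m2 : Num.min (xseq l r j) (xseq l r k) = xseq l r j.
    by apply/min_idPl; apply: xs_mono => //; lia.
  rewrite m1 m2 mulrDl mulfV //; exact: lt0r_neq0.
have m1 : Num.min (xseq l r j + tseq l r j) (xseq l r k) = xseq l r k.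
  by apply/min_idPr; rewrite -xs_S; apply: xs_mono => //; lia.
have m2 : Num.min (xseq l r j) (xseq l r k) = xseq l r k.
  by apply/min_idPr; apply: xs_mono => //; lia.
by rewrite m1 m2 addr0.
Qed.

Lemma Gstep (R : realType) (l r : nat -> R) k :
  (forall n, (1 <= n)%N -> 0 < l n /\ 0 < r n /\ l n + r n = 1) -> (1 <= k)%N ->
  forall j, (1 <= j)%N ->
  Gf l r k j = (if j == k then 1 else 0) + (if (1 < j)%N then Gf l r k j.-1 * r j.-1 else 0)
     + Gf l r k j.+1 * l j.+1.
Proof.
move=> hp k1 j j1; have [F1 F2] := Gflux hp k1.
have [_ [_ lr]] := hp j j1.
transitivity (Gf l r k j * l j + Gf l r k j * r j); first by rewrite -mulrDr lr mulr1.
rewrite (F2 j j1).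
case: j j1 lr => [//|[|j]] _ lr.
  rewrite F1 /=; case: eqP => [<-|kn1] /=; first lra.
  have -> : (1 < k)%N by lia.
  lra.
rewrite (F2 j.+1 isT) /=.
case: (ltngtP j.+2 k) => h; lra.
Qed.

Definition gser d (T : measurableType d) (R : realType) (P : probability T R)
  (X : nat -> T -> nat) (j : nat) : \bar R := (\sum_(i <oo) P (Uset X i j))%E.

Lemma ser_mulr (R : realType) (f : nat -> \bar R) (c : R) : (forall i, (0 <= f i)%E) ->
  (\sum_(i <oo) (f i * c%:E) = (\sum_(i <oo) f i) * c%:E)%E.
Proof.
move=> f0; rewrite muleC -nneseriesZl //; apply: eq_eseriesr => i _; exact: muleC.
Qed.

Lemma grec d (T : measurableType d) (R : realType) (P : probability T R)
  (l r : nat -> R) (k : nat) (X : nat -> T -> nat) :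
  (forall n, (1 <= n)%N -> 0 < l n /\ 0 < r n /\ l n + r n = 1) ->
  is_bd_chain P l r k X ->
  forall j, gser P X j = ((if j == k then 1 else 0) +
     (if (1 < j)%N then gser P X j.-1 * (r j.-1)%:E else 0) + gser P X j.+1 * (l j.+1)%:E)%E.
Proof.
move=> hp hX j.
rewrite /gser eser_shift // (U0 hX) -addeA; congr (_ + _)%E.
transitivity (\sum_(i <oo) ((if (1 < j)%N then P (Uset X i j.-1) * (r j.-1)%:E else 0) +
   P (Uset X i j.+1) * (l j.+1)%:E))%E.
  by apply: eq_eseriesr => i _; exact: (Urec_eval hp hX).
have [l0 _] := hp j.+1 isT.
rewrite nneseriesD; last 2 first.
- move=> i _ _; case: ifP => // j1; apply: mule_ge0 => //.
  have [_ [r0 _]] := hp j.-1 ltac:(lia); rewrite lee_fin; exact: ltW.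
- by move=> i _ _; apply: mule_ge0 => //; rewrite lee_fin; exact: ltW.
rewrite ser_mulr //; congr (_ + _)%E.
case: ifP => j1; last by apply: eseries0.
by rewrite ser_mulr.
Qed.

Lemma solve1 (R : realType) (x : \bar R) (a b c y : R) : (0 <= x)%E -> 0 < c ->
  a%:E = (b%:E + x * c%:E)%E -> a = b + y * c -> x = y%:E.
Proof.
case: x => [x| |] // _ c0.
- rewrite -EFinM -EFinD => ha hb; have ha2 := EFin_inj ha; congr (_%:E).
  apply: (mulIf (lt0r_neq0 c0)); lra.
- by rewrite gt0_mulye ?lte_fin // addey.
Qed.

Lemma ifE (R : realType) (b : bool) (u : R) :
  (if b then u%:E else 0)%E = (if b then u else 0)%:E.
Proof. by case: b. Qed.

Lemma gval d (T : measurableType d) (R : realType) (P : probability T R)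
  (l r : nat -> R) (k : nat) (X : nat -> T -> nat) :
  (forall n, (1 <= n)%N -> 0 < l n /\ 0 < r n /\ l n + r n = 1) -> (1 <= k)%N ->
  is_bd_chain P l r k X ->
  (gser P X 1 * (l 1%N)%:E = 1)%E ->
  forall j, (1 <= j)%N -> gser P X j = (Gf l r k j)%:E.
Proof.
move=> hp k1 hX g1.
have g0 j : (0 <= gser P X j)%E by apply: nneseries_ge0.
have [F1 _] := Gflux hp k1.
have [l1 _] := hp 1%N isT.
have G1 : gser P X 1 = (Gf l r k 1)%:E.
  apply: (@solve1 _ _ 1 0 (l 1%N)) => //; first by rewrite add0e g1.
  by rewrite add0r F1.
have ind : forall j, (1 <= j)%N -> gser P X j = (Gf l r k j)%:E /\ gser P X j.+1 = (Gf l r k j.+1)%:E.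
  elim=> [//|j IH] j1.
  have [GjS Gj] : gser P X j.+1 = (Gf l r k j.+1)%:E /\
    ((1 < j.+1)%N -> gser P X j = (Gf l r k j)%:E).
    case: j IH j1 => [_ _|j IH _]; first by split.
    by have [] := IH isT; split.
  split => //.
  have [l2 _] := hp j.+2 isT.
  have e := grec hp hX j.+1.
  apply: (@solve1 _ _ (Gf l r k j.+1) ((if j.+1 == k then 1 else 0) + (if (1 < j.+1)%N then Gf l r k j * r j else 0)) (l j.+2)) => //.
    rewrite -GjS e; congr (_ + _)%E.
    rewrite EFinD; congr (_ + _)%E; first by case: ifP.
    by case: ifP => h //; rewrite /= (Gj h).
  by rewrite (Gstep hp k1 (isT : (1 <= j.+1)%N)).
by move=> j j1; have [] := ind j j1.
Qed.

Lemma etime_gt (R : realType) (t : option nat) i :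
  (((i%:R : R)%:E < etime t)%E) <-> ~ (exists j, (j <= i)%N /\ t = Some j).
Proof.
case: t => [j|] /=; last by split => [_ [j [_ //]]|_]; exact: ltey.
rewrite lte_fin ltr_nat; split.
  move=> ij [j' [j'i [hj]]]; move: ij; rewrite hj ltnNge j'i //.
by move=> H; rewrite ltnNge; apply/negP => ji; apply: H; exists j.
Qed.

Lemma mSt d (T : measurableType d) (X : nat -> T -> nat) (tau : T -> option nat) :
  (forall m j, measurable [set w | X m w = j]) -> stopping_time X tau ->
  forall j, measurable [set w | tau w = Some j].
Proof.
move=> mX st j; have [B ->] := st j; exact: mcyl.
Qed.

Lemma mGcount d (T : measurableType d) (R : realType) (X : nat -> T -> nat) (tau : T -> option nat) n :
  (forall m j, measurable [set w | X m w = j]) -> stopping_time X tau ->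
  measurable_fun setT (Gcount (R:=R) X tau n).
Proof.
move=> mX st.
pose S i := [set w | X i w = n] `&` ~` (\bigcup_(j in [set j | (j <= i)%N]) [set w | tau w = Some j]).
have mS i : measurable (S i).
  apply: measurableI; first exact: mX.
  apply: measurableC; apply: bigcup_measurable => j _; exact: mSt.
have -> : Gcount (R:=R) X tau n = fun w => (\sum_(i <oo | i \in xpredT) (\1_(S i) w : R)%:E)%E.
  apply/funext => w; apply: eq_eseriesr => i _; congr (_%:E); rewrite indicE; congr (_%:R).
  congr (nat_of_bool _); apply/idP/idP.
    move=> /andP[/eqP hX /etime_gt H]; rewrite inE; split => // -[j jj hj]; apply: H; by exists j.
  rewrite inE => -[hX H]; rewrite hX eqxx /=; apply/etime_gt => -[j [ji hj]]; apply: H; by exists j.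
apply: ge0_emeasurable_sum.
  by move=> i w _ _; rewrite lee_fin.
move=> i _; apply/measurable_EFinP; exact: measurable_indic.
Qed.

Lemma nat_close (R : realType) (h j : nat) : `|(h%:R : R) - j%:R| < 1/2 -> h = j.
Proof.
rewrite ltr_norml => /andP[a b].
case: (ltngtP h j) => // hj; exfalso.
- have : ((h.+1)%:R <= j%:R :> R) by rewrite ler_nat.
  rewrite -natr1; lra.
- have : ((j.+1)%:R <= h%:R :> R) by rewrite ler_nat.
  rewrite -natr1; lra.
Qed.

Lemma event_eq (R : realType) (t : nat -> option nat) h :
  (fun m => etime (R:=R) (t m)) @ \oo --> ((h%:R : R)%:E) -> \forall m \near \oo, t m = Some h.
Proof.
move=> /fine_cvgP [fin cv].
have := cvgr_dist_lt _ _ cv (1/2) ltac:(lra).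
apply: filterS2 fin => m /= + hj; move: hj; case: (t m) => [j|] //= hj _.
by rewrite (nat_close hj).
Qed.

Lemma etime_mono (R : realType) {T : Type} (Tm : nat -> T -> option nat) :
  (forall m w, (etime (Tm m w) <= etime (Tm m.+1 w) :> \bar R)%E) ->
  forall w a b, (a <= b)%N -> (etime (Tm a w) <= etime (Tm b w) :> \bar R)%E.
Proof.
move=> hm w a b ab; rewrite -(subnKC ab); elim: (b - a)%N => [|c IH]; first by rewrite addn0.
by rewrite addnS (le_trans IH).
Qed.

Lemma hit0_set {T : Type} (X : nat -> T -> nat) :
  [set w | hit0 X w <> None] = \bigcup_(i in setT) Uset X i 0.
Proof.
apply/seteqP; split => [w /hit0_some H|w [i _ [_ H]]]; last by apply/hit0_some; exists i.
have H' : exists m, X m w == 0%N by case: H => m hm; exists m; apply/eqP.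
case: (ex_minnP H') => m /eqP hm hmin.
exists m => //; split => // i' i'm h; have := hmin i' (introT eqP h).
by rewrite leqNgt i'm.
Qed.

Unset Implicit Arguments.
Set Strict Implicit.

Theorem lemma3 (d : measure_display) (T : measurableType d) (R : realType)
  (P : probability T R) (l r : nat -> R) (k : nat) (X : nat -> T -> nat)
  (Tm : nat -> T -> option nat) :
  (forall n, (1 <= n)%N -> 0 < l n /\ 0 < r n /\ l n + r n = 1) ->
  (1 <= k)%N ->
  is_bd_chain P l r k X ->
  P [set w | hit0 X w <> None] = 1%E ->
  (forall m, stopping_time X (Tm m)) ->
  (forall m w, (etime (Tm m w) <= etime (Tm m.+1 w) :> \bar R)%E) ->
  (forall m, (\int[P]_w (etime (Tm m w) : \bar R) < +oo)%E) ->
  {ae P, forall w, (fun m => etime (Tm m w) : \bar R) @ \oo --> (etime (hit0 X w) : \bar R)} ->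
  forall n : nat, (1 <= n)%N ->
    let v := (Num.min (xseq l r n) (xseq l r k) / (tseq l r n.-1 * l n))%:E in
    (\int[P]_w (Gcount X (hit0 X) n w : \bar R))%E = v /\
    (fun m => (\int[P]_w (Gcount X (Tm m) n w : \bar R))%E) @ \oo --> v.
Proof.
move=> hp k1 hX hkill hst hmono _ hae n n1 v.
have mX := hX.1.
have gs1 : (gser P X 1 * (l 1%N)%:E = 1)%E.
  by rewrite /gser -ser_mulr // -(kill hp k1 hX) hkill.
have E1 : (\int[P]_w (Gcount X (hit0 X) n w : \bar R))%E = v.
  by rewrite (EG_hit0 hX n1) -/(gser P X n) (gval hp k1 hX gs1 n1).
split => //.
pose G m w := Gcount (R:=R) X (Tm m) n w.
have mG m : measurable_fun setT (G m) by exact: mGcount.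
have G0 m w : (0 <= G m w)%E by apply: nneseries_ge0 => i _ _; rewrite lee_fin.
have nd w : nondecreasing_seq (G^~ w).
  move=> a b ab; apply: lee_nneseries; first by move=> i _ _; rewrite lee_fin.
  move=> i _; rewrite lee_fin ler_nat.
  case: (X i w == n) => //=.
  case hA: ((i%:R : R)%:E < etime (Tm a w))%E => //=.
  by rewrite (lt_le_trans hA (etime_mono hmono w ab)).
have := cvg_monotone_convergence (mu:=P) measurableT mG (fun m w _ => G0 m w) (fun w _ => nd w).
have mlim : measurable_fun setT (fun w => limn (G^~ w)).
  apply: (emeasurable_fun_cvg G) => // w _; exact: ereal_nondecreasing_is_cvgn.
have mH : measurable_fun setT (Gcount (R:=R) X (hit0 X) n).
  have -> : Gcount (R:=R) X (hit0 X) n = fun w => (\sum_(i <oo | i \in xpredT) (\1_(Uset X i n) w : R)%:E)%E.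
    by apply/funext => w; rewrite G_hit0.
  apply: ge0_emeasurable_sum; first by move=> i w _ _; rewrite lee_fin.
  move=> i _; apply/measurable_EFinP; apply: measurable_indic; exact: mU.
have A2 : \forall w \ae P, hit0 X w <> None.
  exists (~` [set w | hit0 X w <> None]); split => //.
    apply: measurableC; rewrite hit0_set; apply: bigcup_measurable => i _; exact: mU.
  by rewrite probability_setC ?hkill ?subee // hit0_set; apply: bigcup_measurable => i _; exact: mU.
have ae : ae_eq P setT (fun w => limn (G^~ w)) (Gcount (R:=R) X (hit0 X) n).
  apply: filterS2 hae A2 => w cw hw _.
  case E: (hit0 X w) hw cw => [h|] // _ cw.
  apply/cvg_lim => //; apply: cvg_near_cst.
  apply: filterS (event_eq cw) => m hm.
  by rewrite /G /Gcount hm E.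
move=> Hc; rewrite -E1 -(ae_eq_integral (Gcount X (hit0 X) n) (fun w => limn (G^~ w)) measurableT mlim mH ae); exact: Hc.
Qed.
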